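(* Let $Y$ be a compact metric space, $X:=Z\times Y$, fix a countable base for the topology of $X$, and for each finite open cover $\mathcal{U}$ of $X$ by basic sets and each $k\in\mathbb{N}$ let $H_{\mathcal{U},k}=\{\alpha\in\overline{\mathcal{S}(\zeta\times\mathrm{id})} : \lim_{n\to\infty}\mathcal{D}(\mathcal{U},\alpha,n)/n<1/k\}$. Then: (1) $H_{\mathcal{U},k}$ is dense in $\overline{\mathcal{S}(\zeta\times\mathrm{id})}$; (2) $H_{\mathcal{U},k}$ is open in $\overline{\mathcal{S}(\zeta\times\mathrm{id})}$; (3) if $\alpha\in\bigcap_{\mathcal{U},k}H_{\mathcal{U},k}$ then $\mathrm{mdim}(\alpha)=0$.
   Context: $(Z,\zeta)$ is the point-like minimal system of Deeley–Putnam–Strung associated to a minimal diffeomorphism of an odd-dimensional sphere $S^d$, $d\ge3$: $Z$ is an infinite compact connected metric space of finite covering dimension with the $K$-theory and Čech cohomology of a point, and $\zeta$ a minimal homeomorphism of $Z$. $\mathrm{Homeo}(X)$ carries the metric $d(g,h)=\sup_x d(g(x),h(x))+\sup_x d(g^{-1}(x),h^{-1}(x))$ and closures are taken there. $\mathcal{S}(\zeta\times\mathrm{id})=\{G^{-1}\circ(\zeta\times\mathrm{id})\circ G : G\in\mathrm{Homeo}(X),\ G(z,y)=(z,g_z(y))$ with $z\mapsto g_z$ a continuous map $Z\to\mathrm{Homeo}(Y)\}$. For a finite open cover $\mathcal{U}$: $\mathrm{ord}(\mathcal{U})=\max_x\sum_{U\in\mathcal{U}}\chi_U(x)-1$, $\mathcal{D}(\mathcal{U})=\min$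 of $\mathrm{ord}(\mathcal{V})$ over finite open refinements $\mathcal{V}$, $\mathcal{D}(\mathcal{U},\alpha,n)=\mathcal{D}(\mathcal{U}\vee\alpha^{-1}\mathcal{U}\vee\cdots\vee\alpha^{-n+1}\mathcal{U})$ (the limit of $\mathcal{D}(\mathcal{U},\alpha,n)/n$ exists and equals the infimum), and $\mathrm{mdim}(\alpha)=\sup_{\mathcal{U}}\lim_n\mathcal{D}(\mathcal{U},\alpha,n)/n$. *)

(* Defs.v *)
From Stdlib Require Import Reals List ClassicalEpsilon.
From Coquelicot Require Import Coquelicot.
Open Scope R_scope.


Definition is_metric {T : Type} (d : T -> T -> R) : Prop :=
  (forall x y, 0 <= d x y) /\ (forall x y, d x y = 0 <-> x = y) /\
  (forall x y, d x y = d y x) /\ (forall x y z, d x z <= d x y + d y z).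

Definition m_open {T : Type} (d : T -> T -> R) (O : T -> Prop) : Prop :=
  forall x, O x -> exists eps, 0 < eps /\ forall y, d x y < eps -> O y.

Definition m_closed {T : Type} (d : T -> T -> R) (C : T -> Prop) : Prop :=
  m_open d (fun x => ~ C x).

Definition m_compact {T : Type} (d : T -> T -> R) : Prop :=
  forall (I : Type) (O : I -> T -> Prop),
    (forall i, m_open d (O i)) -> (forall x, exists i, O i x) ->
    exists l : list I, forall x, exists i, In i l /\ O i x.

Definition m_connected {T : Type} (d : T -> T -> R) : Prop :=
  forall A B : T -> Prop, m_open d A -> m_open d B ->
    (forall x, A x \/ B x) -> (forall x, ~ (A x /\ B x)) ->
    (forall x, ~ A x) \/ (forall x, ~ B x).

Definition m_infinite (T : Type) : Prop := forall l : list T, exists x, ~ In x l.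

Definition m_cont {A B : Type} (dA : A -> A -> R) (dB : B -> B -> R) (f : A -> B) :=
  forall x eps, 0 < eps -> exists delta, 0 < delta /\
    forall y, dA x y < delta -> dB (f x) (f y) < eps.

Definition dprod {A B : Type} (dA : A -> A -> R) (dB : B -> B -> R) (p q : A * B) : R :=
  Rmax (dA (fst p) (fst q)) (dB (snd p) (snd q)).

Record homeo {T : Type} (d : T -> T -> R) := Homeo {
  hf : T -> T; hg : T -> T;
  hfg : forall x, hf (hg x) = x; hgf : forall x, hg (hf x) = x;
  hf_cont : m_cont d d hf; hg_cont : m_cont d d hg }.
Arguments hf {T d}. Arguments hg {T d}.

(* d(f,g) < eps, where d(f,g) = sup_x d(f x, g x) + sup_x d(f^-1 x, g^-1 x);
   written out: the two sups are bounded by some a, b with a + b < eps. *)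
Definition hdist_lt {T : Type} (d : T -> T -> R) (f g : homeo d) (eps : R) : Prop :=
  exists a b, a + b < eps /\ (forall x, d (hf f x) (hf g x) <= a) /\
                               (forall x, d (hg f x) (hg g x) <= b).

Definition in_closure {T : Type} (d : T -> T -> R) (S : homeo d -> Prop) (a : homeo d) : Prop :=
  forall eps, 0 < eps -> exists b, S b /\ hdist_lt d a b eps.

Definition minimal_homeo {T : Type} (d : T -> T -> R) (z : homeo d) : Prop :=
  forall x (O : T -> Prop), m_open d O -> (exists y, O y) ->
    exists n : nat, O (Nat.iter n (hf z) x) \/ O (Nat.iter n (hg z) x).

Definition cover := fun (T : Type) => list (T -> Prop).

Definition open_cover {T : Type} (d : T -> T -> R) (U : list (T -> Prop)) : Prop :=
  (forall A, In A U -> m_open d A) /\ (forall x, exists A, In A U /\ A x).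

Definition refines {T : Type} (V U : list (T -> Prop)) : Prop :=
  forall B, In B V -> exists A, In A U /\ forall x, B x -> A x.

(* number of members of U containing x (counted with multiplicity) *)
Definition cnt {T : Type} (x : T) (U : list (T -> Prop)) : nat :=
  length (filter (fun A => if excluded_middle_informative (A x) then true else false) U).

(* ord(U) <= m  iff  max_x sum_U chi_U(x) - 1 <= m *)
Definition ord_le {T : Type} (U : list (T -> Prop)) (m : nat) : Prop :=
  forall x, (cnt x U <= m + 1)%nat.

Definition D_le {T : Type} (d : T -> T -> R) (U : list (T -> Prop)) (m : nat) : Prop :=
  exists V, open_cover d V /\ refines V U /\ ord_le V m.

Definition Dcov {T : Type} (d : T -> T -> R) (U : list (T -> Prop)) : nat :=
  epsilon (inhabits 0%nat)
    (fun m => D_le d U m /\ forall m', D_le d U m' -> (m <= m')%nat).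

Definition join {T : Type} (U V : list (T -> Prop)) : list (T -> Prop) :=
  flat_map (fun A => map (fun B => fun x => A x /\ B x) V) U.

Definition preim {T : Type} (f : T -> T) (U : list (T -> Prop)) : list (T -> Prop) :=
  map (fun A => fun x => A (f x)) U.

(* U v a^-1 U v ... v a^-(n-1) U  (the trivial cover {X} for n = 0) *)
Fixpoint joinN {T : Type} (U : list (T -> Prop)) (a : T -> T) (n : nat) : list (T -> Prop) :=
  match n with
  | O => (fun _ => True) :: nil
  | S n' => join (joinN U a n') (preim (Nat.iter n' a) U)
  end.

Definition Dn {T : Type} (d : T -> T -> R) (U : list (T -> Prop)) (a : homeo d) (n : nat) : nat :=
  Dcov d (joinN U (hf a) n).

Definition Dlim {T : Type} (d : T -> T -> R) (U : list (T -> Prop)) (a : homeo d) : Rbar :=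
  Lim_seq (fun n => INR (Dn d U a n) / INR n).

Definition mdim {T : Type} (d : T -> T -> R) (a : homeo d) : Rbar :=
  Rbar_lub (fun r => exists U, open_cover d U /\ r = Dlim d U a).

Definition covdim_le {T : Type} (d : T -> T -> R) (m : nat) : Prop :=
  forall U, open_cover d U -> D_le d U m.

Definition is_base {T : Type} (d : T -> T -> R) (B : nat -> T -> Prop) : Prop :=
  (forall n, m_open d (B n)) /\
  (forall O, m_open d O -> forall x, O x -> exists n, B n x /\ forall y, B n y -> O y).

Definition in_S {Z Y : Type} (dZ : Z -> Z -> R) (dY : Y -> Y -> R) (zeta : homeo dZ)
  (b : homeo (dprod dZ dY)) : Prop :=
  exists (G : homeo (dprod dZ dY)) (g : Z -> homeo dY),
    (forall z eps, 0 < eps -> exists delta, 0 < delta /\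
        forall z', dZ z z' < delta -> hdist_lt dY (g z) (g z') eps) /\
    (forall z y, hf G (z, y) = (z, hf (g z) y)) /\
    (forall p, hf b p = hg G (hf zeta (fst (hf G p)), snd (hf G p))).

Definition in_clS {Z Y : Type} (dZ : Z -> Z -> R) (dY : Y -> Y -> R) (zeta : homeo dZ) :=
  in_closure (dprod dZ dY) (in_S dZ dY zeta).

(* H_{U,k} for the basic cover indexed by l *)
Definition H_Uk {Z Y : Type} (dZ : Z -> Z -> R) (dY : Y -> Y -> R) (zeta : homeo dZ)
  (B : nat -> Z * Y -> Prop) (l : list nat) (k : nat) (a : homeo (dprod dZ dY)) : Prop :=
  in_clS dZ dY zeta a /\ Rbar_lt (Dlim (dprod dZ dY) (map B l) a) (Finite (1 / INR k)).

Definition basic_cover {T : Type} (B : nat -> T -> Prop) (l : list nat) : Prop :=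
  forall x, exists n, In n l /\ B n x.

(* Main.v *)
Require Import Defs.
From Stdlib Require Import Reals List Lra Lia ClassicalEpsilon Classical.
From Coquelicot Require Import Coquelicot.
Open Scope R_scope.


Definition bP (P : Prop) : bool := if excluded_middle_informative P then true else false.
Lemma bP_true (P : Prop) : bP P = true <-> P.
Proof. unfold bP. destruct (excluded_middle_informative P); split; auto; discriminate. Qed.
Lemma bP_1 (P : Prop) : bP P = true -> P.
Proof. apply bP_true. Qed.
Lemma bP_2 (P : Prop) : P -> bP P = true.
Proof. apply bP_true. Qed.
Lemma bP_ext (P Q : Prop) : (P <-> Q) -> bP P = bP Q.
Proof. intros H. unfold bP. destruct (excluded_middle_informative P), (excluded_middle_informative Q); tauto. Qed.

Lemma cnt_def {T} (x : T) U : cnt x U = length (filter (fun A => bP (A x)) U).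
Proof. reflexivity. Qed.

Lemma met_refl {T} (d : T -> T -> R) (hm : is_metric d) x : d x x = 0.
Proof. destruct hm as (_&H&_). apply H; reflexivity. Qed.
Lemma met_sym {T} (d : T -> T -> R) (hm : is_metric d) x y : d x y = d y x.
Proof. destruct hm as (_&_&H&_). apply H. Qed.
Lemma met_tri {T} (d : T -> T -> R) (hm : is_metric d) x y z : d x z <= d x y + d y z.
Proof. destruct hm as (_&_&_&H). apply H. Qed.
Lemma met_pos {T} (d : T -> T -> R) (hm : is_metric d) x y : 0 <= d x y.
Proof. destruct hm as (H&_). apply H. Qed.

Lemma ball_open {T} (d : T -> T -> R) (hm : is_metric d) c r : m_open d (fun y => d c y < r).
Proof.
  intros x Hx. exists (r - d c x). split. lra.
  intros y Hy. pose proof (met_tri d hm c x y). lra.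
Qed.

Lemma open_preim {A B} (dA : A -> A -> R) (dB : B -> B -> R) f O :
  m_cont dA dB f -> m_open dB O -> m_open dA (fun x => O (f x)).
Proof.
  intros Hc HO x Hx. destruct (HO _ Hx) as (e&He&H).
  destruct (Hc x e He) as (del&Hd&H2). exists del. split; auto.
Qed.

Lemma open_and {T} (d : T -> T -> R) A B : m_open d A -> m_open d B -> m_open d (fun x => A x /\ B x).
Proof.
  intros HA HB x [Ax Bx]. destruct (HA _ Ax) as (e1&He1&H1). destruct (HB _ Bx) as (e2&He2&H2).
  exists (Rmin e1 e2). split. apply Rmin_glb_lt; auto.
  intros y Hy. split; [apply H1|apply H2]; eapply Rlt_le_trans; eauto; [apply Rmin_l|apply Rmin_r].
Qed.

Lemma open_True {T} (d : T -> T -> R) : m_open d (fun _ => True).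
Proof. intros x _. exists 1. split; auto; lra. Qed.

Lemma cont_comp {T} (d : T -> T -> R) f g : m_cont d d f -> m_cont d d g -> m_cont d d (fun x => f (g x)).
Proof.
  intros Hf Hg x e He. destruct (Hf (g x) e He) as (e1&He1&H1).
  destruct (Hg x e1 He1) as (e2&He2&H2). exists e2. split; auto.
Qed.

Lemma cont_id {T} (d : T -> T -> R) : m_cont d d (fun x => x).
Proof. intros x e He. exists e. split; auto. Qed.

Lemma cont_iter {T} (d : T -> T -> R) f : m_cont d d f -> forall j, m_cont d d (Nat.iter j f).
Proof.
  intros Hf j. induction j; simpl. apply cont_id. apply (cont_comp d f (Nat.iter j f)); auto.
Qed.

Lemma in_join {T} (U V : list (T -> Prop)) E :
  In E (join U V) <-> exists A B, In A U /\ In B V /\ E = (fun x => A x /\ B x).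
Proof.
  unfold join. rewrite in_flat_map. split.
  - intros (A&HA&HE). apply in_map_iff in HE. destruct HE as (B&<-&HB). exists A, B. auto.
  - intros (A&B&HA&HB&->). exists A. split; auto. apply in_map_iff. exists B. auto.
Qed.

Lemma in_preim {T} (f : T -> T) U E : In E (preim f U) <-> exists A, In A U /\ E = (fun x => A (f x)).
Proof.
  unfold preim. rewrite in_map_iff. split; intros (A&H1&H2); exists A; auto.
Qed.

Lemma joinN_fwd {T} (U : list (T -> Prop)) (f : T -> T) n E :
  In E (joinN U f n) -> forall j, (j < n)%nat -> exists A, In A U /\ forall x, E x -> A (Nat.iter j f x).
Proof.
  revert E. induction n; intros E HE j Hj. lia.
  simpl in HE. apply in_join in HE. destruct HE as (E1&E2&H1&H2&->).
  apply in_preim in H2. destruct H2 as (A&HA&->).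
  destruct (Nat.eq_dec j n) as [->|Hne].
  - exists A. split; auto. intros x [_ Hx]. exact Hx.
  - destruct (IHn E1 H1 j ltac:(lia)) as (A'&HA'&HH). exists A'. split; auto.
    intros x [Hx _]. auto.
Qed.

Lemma joinN_bwd {T} (U : list (T -> Prop)) (f : T -> T) n (Bs : T -> Prop) :
  (forall j, (j < n)%nat -> exists A, In A U /\ forall x, Bs x -> A (Nat.iter j f x)) ->
  exists E, In E (joinN U f n) /\ forall x, Bs x -> E x.
Proof.
  induction n; intros H.
  - exists (fun _ => True). simpl. auto.
  - destruct IHn as (E1&H1&HB1). { intros j Hj. apply H. lia. }
    destruct (H n ltac:(lia)) as (A&HA&HBA).
    exists (fun x => E1 x /\ A (Nat.iter n f x)). split.
    + simpl. apply in_join. exists E1, (fun x => A (Nat.iter n f x)). repeat split; auto.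
      apply in_preim. exists A. auto.
    + intros x Hx. auto.
Qed.

Lemma refines_trans {T} (U V W : list (T -> Prop)) : refines U V -> refines V W -> refines U W.
Proof.
  intros H1 H2 A HA. destruct (H1 A HA) as (B&HB&HAB). destruct (H2 B HB) as (C&HC&HBC).
  exists C. split; auto.
Qed.

Lemma refines_refl {T} (U : list (T -> Prop)) : refines U U.
Proof. intros A HA. exists A. auto. Qed.

Lemma oc_preim {T} (d : T -> T -> R) f U : m_cont d d f -> open_cover d U -> open_cover d (preim f U).
Proof.
  intros Hf [Ho Hc]. split.
  - intros E HE. apply in_preim in HE. destruct HE as (A&HA&->). apply (open_preim d d); auto.
  - intros x. destruct (Hc (f x)) as (A&HA&Ax). exists (fun y => A (f y)). split; auto.
    apply in_preim. eauto.
Qed.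

Lemma oc_join {T} (d : T -> T -> R) U V : open_cover d U -> open_cover d V -> open_cover d (join U V).
Proof.
  intros [Ho1 Hc1] [Ho2 Hc2]. split.
  - intros E HE. apply in_join in HE. destruct HE as (A&B&HA&HB&->). apply open_and; auto.
  - intros x. destruct (Hc1 x) as (A&HA&Ax). destruct (Hc2 x) as (B&HB&Bx).
    exists (fun y => A y /\ B y). split; auto. apply in_join. eauto 10.
Qed.

Lemma oc_joinN {T} (d : T -> T -> R) U f : m_cont d d f -> open_cover d U -> forall n, open_cover d (joinN U f n).
Proof.
  intros Hf HU n. induction n; simpl.
  - split. intros A [<-|[]]. apply open_True. intros x. exists (fun _ => True). simpl; auto.
  - apply oc_join; auto. apply oc_preim; auto. apply cont_iter; auto.
Qed.

Lemma cnt_le_length {T} (x : T) U : (cnt x U <= length U)%nat.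
Proof. unfold cnt. apply filter_length_le. Qed.

Lemma cnt_cons {T} (x : T) A U : cnt x (A :: U) = ((if bP (A x) then 1 else 0) + cnt x U)%nat.
Proof. rewrite !cnt_def. simpl. destruct (bP (A x)); reflexivity. Qed.

Lemma cnt_app {T} (x : T) U V : cnt x (U ++ V) = (cnt x U + cnt x V)%nat.
Proof. rewrite !cnt_def, filter_app, length_app. reflexivity. Qed.

Lemma cnt_map_le {T I} (x : T) (F : I -> T -> Prop) (G : I -> T -> Prop) l :
  (forall i, In i l -> F i x -> G i x) -> (cnt x (map F l) <= cnt x (map G l))%nat.
Proof.
  induction l; intros H; simpl. lia. rewrite !cnt_cons.
  assert (IH := IHl (fun i Hi => H i (or_intror Hi))).
  destruct (bP (F a x)) eqn:E1.
  - apply bP_1 in E1. assert (HG : G a x) by (apply H; simpl; auto). apply bP_2 in HG. rewrite HG. lia.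
  - destruct (bP (G a x)); lia.
Qed.

Lemma cnt_map_eq {T I} (x : T) (F : I -> T -> Prop) l :
  cnt x (map F l) = length (filter (fun i => bP (F i x)) l).
Proof.
  induction l; simpl. reflexivity. rewrite cnt_cons, IHl. destruct (bP (F a x)); reflexivity.
Qed.

Lemma cnt_preim {T} (x : T) f U : cnt x (preim f U) = cnt (f x) U.
Proof.
  induction U; simpl. reflexivity. unfold preim in *. simpl. rewrite !cnt_cons, IHU. reflexivity.
Qed.

Lemma filter_map_len {A B} (f : B -> bool) (g : A -> B) l :
  length (filter f (map g l)) = length (filter (fun i => f (g i)) l).
Proof. induction l; simpl. reflexivity. destruct (f (g a)); simpl; lia. Qed.

Lemma cnt_nth {T} (x : T) (U : list (T -> Prop)) :
  cnt x U = length (filter (fun i => bP (nth i U (fun _ => False) x)) (seq 0 (length U))).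
Proof.
  induction U. reflexivity. rewrite cnt_cons, IHU. simpl length.
  change (seq 0 (S (length U))) with (0%nat :: seq 1 (length U)). rewrite <- seq_shift.
  cbn [filter nth].
  destruct (bP (a x)); cbn [length]; rewrite filter_map_len; reflexivity.
Qed.

Lemma D_le_refine {T} (d : T -> T -> R) U V m : refines U V -> D_le d U m -> D_le d V m.
Proof.
  intros HUV (W&HW&HWU&Ho). exists W. split; auto. split; auto. eapply refines_trans; eauto.
Qed.

Lemma D_le_self {T} (d : T -> T -> R) U : open_cover d U -> D_le d U (length U).
Proof.
  intros H. exists U. split; auto. split. apply refines_refl.
  intros x. pose proof (cnt_le_length x U). lia.
Qed.

Lemma least_nat (P : nat -> Prop) : (exists n, P n) -> exists n, P n /\ forall m, P m -> (n <= m)%nat.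
Proof.
  intros [n Hn]. revert Hn. pattern n. apply (well_founded_induction Wf_nat.lt_wf). clear n.
  intros n IH Hn. destruct (classic (exists m, P m /\ (m < n)%nat)) as [(m&Hm&Hlt)|Hno].
  - apply (IH m Hlt Hm).
  - exists n. split; auto. intros m Hm. destruct (Compare_dec.le_lt_dec n m); auto. exfalso. apply Hno. eauto.
Qed.

Lemma Dcov_spec {T} (d : T -> T -> R) U : (exists m, D_le d U m) ->
  D_le d U (Dcov d U) /\ forall m, D_le d U m -> (Dcov d U <= m)%nat.
Proof.
  intros H. unfold Dcov. apply epsilon_spec. apply least_nat. exact H.
Qed.

Lemma Dcov_oc {T} (d : T -> T -> R) U : open_cover d U ->
  D_le d U (Dcov d U) /\ forall m, D_le d U m -> (Dcov d U <= m)%nat.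
Proof. intros H. apply Dcov_spec. exists (length U). apply D_le_self; auto. Qed.

Lemma D_le_preim {T} (d : T -> T -> R) f U m : m_cont d d f -> D_le d U m -> D_le d (preim f U) m.
Proof.
  intros Hf (V&HV&HVU&Ho). exists (preim f V). split. apply oc_preim; auto. split.
  - intros E HE. apply in_preim in HE. destruct HE as (B&HB&->). destruct (HVU B HB) as (A&HA&HBA).
    exists (fun x => A (f x)). split. apply in_preim; eauto. auto.
  - intros x. rewrite cnt_preim. apply Ho.
Qed.

Lemma joinN_add_ref {T} (U : list (T -> Prop)) f m n :
  refines (join (joinN U f m) (preim (Nat.iter m f) (joinN U f n))) (joinN U f (m + n)).
Proof.
  intros E HE. apply in_join in HE. destruct HE as (E1&E2'&H1&H2&->).
  apply in_preim in H2. destruct H2 as (E2&H2&->).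
  apply joinN_bwd. intros j Hj. destruct (Compare_dec.le_lt_dec m j).
  - destruct (joinN_fwd U f n E2 H2 (j - m) ltac:(lia)) as (A&HA&HH). exists A. split; auto.
    intros x [_ Hx]. specialize (HH _ Hx). rewrite <- Nat.iter_add in HH.
    replace (j - m + m)%nat with j in HH by lia. exact HH.
  - destruct (joinN_fwd U f m E1 H1 j l) as (A&HA&HH). exists A. split; auto. intros x [Hx _]. auto.
Qed.


Lemma list_min_pos {I} (l : list I) (r : I -> R) :
  (forall i, In i l -> 0 < r i) -> exists del, 0 < del /\ forall i, In i l -> del <= r i.
Proof.
  induction l; intros H.
  - exists 1. split. lra. intros i [].
  - destruct IHl as (del&Hd&Hl). { intros i Hi. apply H. simpl; auto. }
    exists (Rmin del (r a)). split. apply Rmin_glb_lt; auto. apply H; simpl; auto.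
    intros i [<-|Hi]. apply Rmin_r. eapply Rle_trans. apply Rmin_l. auto.
Qed.

Lemma lebesgue {T} (d : T -> T -> R) (hm : is_metric d) (hc : m_compact d) V :
  open_cover d V -> exists lam, 0 < lam /\ forall x, exists A, In A V /\ forall z, d x z < lam -> A z.
Proof.
  intros [Ho Hcv].
  set (I := {p : T * R | 0 < snd p /\ exists A, In A V /\ forall z, d (fst p) z < 2 * snd p -> A z}).
  set (O := fun (i : I) z => d (fst (proj1_sig i)) z < snd (proj1_sig i)).
  destruct (hc I O) as (l&Hl).
  - intros i. apply ball_open; auto.
  - intros x. destruct (Hcv x) as (A&HA&Ax). destruct (Ho A HA x Ax) as (e&He&HH).
    assert (Hp : 0 < snd (x, e/2) /\ exists A, In A V /\ forall z, d (fst (x, e/2)) z < 2 * snd (x, e/2) -> A z).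
    { simpl. split. lra. exists A. split; auto. intros z Hz. apply HH. lra. }
    exists (exist _ (x, e/2) Hp). unfold O. simpl. rewrite met_refl; auto. lra.
  - destruct (list_min_pos l (fun i => snd (proj1_sig i))) as (del&Hd&Hdl).
    { intros i _. apply (proj1 (proj2_sig i)). }
    exists del. split; auto. intros x. destruct (Hl x) as (i&Hi&Hx).
    pose proof (Hdl _ Hi) as H. unfold O in Hx.
    destruct i as [[c r] [Hr (A&HA&HAc)]]. simpl in *.
    exists A. split; auto. intros z Hz. apply HAc. simpl.
    pose proof (met_tri d hm c x z). lra.
Qed.

Definition unif_cont {T} (d : T -> T -> R) (f : T -> T) :=
  forall eps, 0 < eps -> exists del, 0 < del /\ forall x y, d x y < del -> d (f x) (f y) < eps.

Lemma cont_unif {T} (d : T -> T -> R) (hm : is_metric d) (hc : m_compact d) f :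
  m_cont d d f -> unif_cont d f.
Proof.
  intros Hf eps He.
  set (I := {p : T * R | 0 < snd p /\ forall y, d (fst p) y < 2 * snd p -> d (f (fst p)) (f y) < eps / 2}).
  set (O := fun (i : I) z => d (fst (proj1_sig i)) z < snd (proj1_sig i)).
  destruct (hc I O) as (l&Hl).
  - intros i. apply ball_open; auto.
  - intros x. destruct (Hf x (eps/2) ltac:(lra)) as (del&Hd&HH).
    assert (Hp : 0 < snd (x, del/2) /\ forall y, d (fst (x, del/2)) y < 2 * snd (x, del/2) -> d (f (fst (x, del/2))) (f y) < eps / 2).
    { simpl. split. lra. intros y Hy. apply HH. lra. }
    exists (exist _ (x, del/2) Hp). unfold O. simpl. rewrite met_refl; auto. lra.
  - destruct (list_min_pos l (fun i => snd (proj1_sig i))) as (del&Hd&Hdl).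
    { intros i _. apply (proj1 (proj2_sig i)). }
    exists del. split; auto. intros x y Hxy. destruct (Hl x) as (i&Hi&Hx).
    pose proof (Hdl _ Hi) as H. unfold O in Hx.
    destruct i as [[c r] [Hr HAc]]. simpl in *.
    assert (H1 : d (f c) (f x) < eps / 2) by (apply HAc; lra).
    assert (H2 : d (f c) (f y) < eps / 2).
    { apply HAc. pose proof (met_tri d hm c x y). lra. }
    pose proof (met_tri d hm (f x) (f c) (f y)). rewrite (met_sym d hm (f x) (f c)) in H0. lra.
Qed.

Lemma unif_comp {T} (d : T -> T -> R) f g : unif_cont d f -> unif_cont d g -> unif_cont d (fun x => f (g x)).
Proof.
  intros Hf Hg e He. destruct (Hf e He) as (e1&He1&H1). destruct (Hg e1 He1) as (e2&He2&H2).
  exists e2. split; auto.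
Qed.

Lemma unif_iter {T} (d : T -> T -> R) f : unif_cont d f -> forall j, unif_cont d (Nat.iter j f).
Proof.
  intros Hf j. induction j; simpl.
  - intros e He. exists e. split; auto.
  - apply (unif_comp d f (Nat.iter j f)); auto.
Qed.

Lemma iter_close {T} (d : T -> T -> R) (hm : is_metric d) f : unif_cont d f ->
  forall j eps, 0 < eps -> exists del, 0 < del /\ forall g : T -> T, (forall x, d (f x) (g x) < del) ->
    forall x, d (Nat.iter j f x) (Nat.iter j g x) < eps.
Proof.
  intros Hf j. induction j; intros eps He.
  - exists 1. split. lra. intros g _ x. simpl. rewrite met_refl; auto.
  - destruct (Hf (eps/2) ltac:(lra)) as (eta&Heta&Hu).
    destruct (IHj eta Heta) as (d1&Hd1&Hc).
    exists (Rmin d1 (eps/2)). split. apply Rmin_glb_lt; lra.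
    intros g Hg x. simpl.
    assert (Hg1 : forall x, d (f x) (g x) < d1).
    { intros y. eapply Rlt_le_trans. apply Hg. apply Rmin_l. }
    specialize (Hc g Hg1 x). specialize (Hu _ _ Hc).
    assert (Hg2 := Hg (Nat.iter j g x)). pose proof (Rmin_r d1 (eps/2)).
    pose proof (met_tri d hm (f (Nat.iter j f x)) (f (Nat.iter j g x)) (g (Nat.iter j g x))). lra.
Qed.

Lemma iter_S_r {A} (f : A -> A) j y : Nat.iter (S j) f y = Nat.iter j f (f y).
Proof. replace (S j) with (j + 1)%nat by lia. rewrite Nat.iter_add. reflexivity. Qed.

Lemma iter_hg_hf {T} (d : T -> T -> R) (a : homeo d) j x : Nat.iter j (hg a) (Nat.iter j (hf a) x) = x.
Proof.
  revert x. induction j; intros x. reflexivity.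
  rewrite iter_S_r. simpl. rewrite hgf. apply IHj.
Qed.

Lemma iter_hf_hg {T} (d : T -> T -> R) (a : homeo d) j x : Nat.iter j (hf a) (Nat.iter j (hg a) x) = x.
Proof.
  revert x. induction j; intros x. reflexivity.
  rewrite iter_S_r. simpl. rewrite hfg. apply IHj.
Qed.

Lemma dprod_metric {A B} (dA : A -> A -> R) (dB : B -> B -> R) :
  is_metric dA -> is_metric dB -> is_metric (dprod dA dB).
Proof.
  intros hA hB. unfold dprod. split; [|split; [|split]].
  - intros x y. pose proof (met_pos dA hA (fst x) (fst y)). eapply Rle_trans; eauto. apply Rmax_l.
  - intros [x1 x2] [y1 y2]; simpl. split.
    + intros H. pose proof (met_pos dA hA x1 y1). pose proof (met_pos dB hB x2 y2).
      pose proof (Rmax_l (dA x1 y1) (dB x2 y2)). pose proof (Rmax_r (dA x1 y1) (dB x2 y2)).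
      assert (dA x1 y1 = 0) by lra. assert (dB x2 y2 = 0) by lra.
      apply (proj1 (proj2 hA)) in H4. apply (proj1 (proj2 hB)) in H5. subst. reflexivity.
    + intros H. inversion H. subst. rewrite (met_refl dA hA), (met_refl dB hB). apply Rmax_left. lra.
  - intros x y. rewrite (met_sym dA hA), (met_sym dB hB). reflexivity.
  - intros x y z. apply Rmax_lub.
    + pose proof (met_tri dA hA (fst x) (fst y) (fst z)).
      pose proof (Rmax_l (dA (fst x) (fst y)) (dB (snd x) (snd y))).
      pose proof (Rmax_l (dA (fst y) (fst z)) (dB (snd y) (snd z))). lra.
    + pose proof (met_tri dB hB (snd x) (snd y) (snd z)).
      pose proof (Rmax_r (dA (fst x) (fst y)) (dB (snd x) (snd y))).
      pose proof (Rmax_r (dA (fst y) (fst z)) (dB (snd y) (snd z))). lra.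
Qed.

Lemma dprod_lt {A B} (dA : A -> A -> R) (dB : B -> B -> R) p q e :
  dA (fst p) (fst q) < e -> dB (snd p) (snd q) < e -> dprod dA dB p q < e.
Proof. intros. unfold dprod. apply Rmax_lub_lt; auto. Qed.

Lemma dprod_lt_inv {A B} (dA : A -> A -> R) (dB : B -> B -> R) p q e :
  dprod dA dB p q < e -> dA (fst p) (fst q) < e /\ dB (snd p) (snd q) < e.
Proof.
  unfold dprod. intros H. pose proof (Rmax_l (dA (fst p) (fst q)) (dB (snd p) (snd q))).
  pose proof (Rmax_r (dA (fst p) (fst q)) (dB (snd p) (snd q))). split; lra.
Qed.

Lemma prod_compact {A B} (dA : A -> A -> R) (dB : B -> B -> R) :
  is_metric dA -> is_metric dB -> m_compact dA -> m_compact dB -> m_compact (dprod dA dB).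
Proof.
  intros hA hB cA cB I O HO Hcv.
  assert (Htube : forall z, exists r li, 0 < r /\ forall z' y', dA z z' < r -> exists i, In i li /\ O i (z', y')).
  { intros z.
    set (J := {p : B * R * I | 0 < snd (fst p) /\ forall z' y', dA z z' < snd (fst p) -> dB (fst (fst p)) y' < snd (fst p) -> O (snd p) (z', y')}).
    set (OJ := fun (j : J) y => dB (fst (fst (proj1_sig j))) y < snd (fst (proj1_sig j))).
    destruct (cB J OJ) as (l&Hl).
    - intros j. apply ball_open; auto.
    - intros y. destruct (Hcv (z, y)) as (i&Hi). destruct (HO i _ Hi) as (e&He&HH).
      assert (Hp : 0 < snd (fst (y, e, i)) /\ forall z' y', dA z z' < snd (fst (y, e, i)) -> dB (fst (fst (y, e, i))) y' < snd (fst (y, e, i)) -> O (snd (y, e, i)) (z', y')).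
      { simpl. split; auto. intros z' y' H1 H2. apply HH. apply dprod_lt; auto. }
      exists (exist _ (y, e, i) Hp). unfold OJ. simpl. rewrite met_refl; auto.
    - destruct (list_min_pos l (fun j => snd (fst (proj1_sig j)))) as (del&Hd&Hdl).
      { intros j _. apply (proj1 (proj2_sig j)). }
      exists del, (map (fun j => snd (proj1_sig j)) l). split; auto.
      intros z' y' Hz. destruct (Hl y') as (j&Hj&Hy). exists (snd (proj1_sig j)). split.
      apply in_map_iff. exists j. split; auto.
      pose proof (Hdl j Hj). unfold OJ in Hy. apply (proj2 (proj2_sig j)); lra. }
  set (K := {p : A * R * list I | 0 < snd (fst p) /\ forall z' y', dA (fst (fst p)) z' < snd (fst p) -> exists i, In i (snd p) /\ O i (z', y')}).
  set (OK := fun (k : K) z => dA (fst (fst (proj1_sig k))) z < snd (fst (proj1_sig k))).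
  destruct (cA K OK) as (l&Hl).
  - intros k. apply ball_open; auto.
  - intros z. destruct (Htube z) as (r&li&Hr&HH).
    assert (Hp : 0 < snd (fst (z, r, li)) /\ forall z' y', dA (fst (fst (z, r, li))) z' < snd (fst (z, r, li)) -> exists i, In i (snd (z, r, li)) /\ O i (z', y')).
    { simpl. auto. }
    exists (exist _ (z, r, li) Hp). unfold OK. simpl. rewrite met_refl; auto.
  - exists (flat_map (fun k => snd (proj1_sig k)) l). intros [z y].
    destruct (Hl z) as (k&Hk&Hz). unfold OK in Hz.
    destruct (proj2 (proj2_sig k) z y Hz) as (i&Hi&Oi). exists i. split; auto.
    apply in_flat_map. exists k. auto.
Qed.


Definition gset {T} (d : T -> T -> R) (A : T -> Prop) (x : T) : R -> Prop :=
  fun r => 0 <= r <= 1 /\ forall y, d x y < r -> A y.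
Definition gfun {T} (d : T -> T -> R) (A : T -> Prop) (x : T) : R := real (Lub_Rbar (gset d A x)).

Lemma gfun_prop {T} (d : T -> T -> R) (hm : is_metric d) A x :
  0 <= gfun d A x <= 1 /\ (forall r, gset d A x r -> r <= gfun d A x) /\
  (forall b, (forall r, gset d A x r -> r <= b) -> gfun d A x <= b).
Proof.
  unfold gfun. destruct (Lub_Rbar_correct (gset d A x)) as [Hub Hlub].
  assert (H0 : gset d A x 0).
  { split. lra. intros y Hy. pose proof (met_pos d hm x y). lra. }
  assert (H1 : is_ub_Rbar (gset d A x) 1). { intros s [Hs _]. simpl. lra. }
  destruct (Lub_Rbar (gset d A x)) as [r| |].
  - simpl. pose proof (Hub 0 H0). pose proof (Hlub 1 H1). simpl in *. split. lra. split.
    + intros s Hs. exact (Hub s Hs).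
    + intros b Hb. apply (Hlub (Finite b)). intros s Hs. simpl. auto.
  - exfalso. exact (Hlub 1 H1).
  - exfalso. exact (Hub 0 H0).
Qed.

Lemma gfun_pos {T} (d : T -> T -> R) (hm : is_metric d) A x : m_open d A -> A x -> 0 < gfun d A x.
Proof.
  intros HA Ax. destruct (HA x Ax) as (e&He&HH). destruct (gfun_prop d hm A x) as (_&Hr&_).
  assert (gset d A x (Rmin e 1)).
  { split. split. apply Rmin_glb; lra. apply Rmin_r. intros y Hy. apply HH.
    eapply Rlt_le_trans. apply Hy. apply Rmin_l. }
  apply Hr in H. assert (0 < Rmin e 1) by (apply Rmin_glb_lt; lra). lra.
Qed.

Lemma gfun_pos_inv {T} (d : T -> T -> R) (hm : is_metric d) A x : 0 < gfun d A x -> A x.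
Proof.
  intros H. apply NNPP. intros Hn. destruct (gfun_prop d hm A x) as (_&_&Hb).
  assert (gfun d A x <= 0).
  { apply Hb. intros r [Hr HH]. destruct (Rle_dec r 0); auto. exfalso. apply Hn. apply HH.
    rewrite met_refl; auto. lra. }
  lra.
Qed.

Lemma gfun_lip1 {T} (d : T -> T -> R) (hm : is_metric d) A x y : gfun d A x <= gfun d A y + d x y.
Proof.
  destruct (gfun_prop d hm A x) as (_&_&Hb). destruct (gfun_prop d hm A y) as ((Hy0&_)&Hry&_).
  apply Hb. intros r [[Hr0 Hr1] HH]. destruct (Rle_dec r (d x y)). lra.
  assert (gset d A y (r - d x y)).
  { split. pose proof (met_pos d hm x y). lra. intros w Hw. apply HH.
    pose proof (met_tri d hm x y w). lra. }
  apply Hry in H. lra.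
Qed.

Definition lip {T} (d : T -> T -> R) (f : T -> R) (L : R) := 0 <= L /\ forall x y, Rabs (f x - f y) <= L * d x y.

Lemma gfun_lip {T} (d : T -> T -> R) (hm : is_metric d) A : lip d (gfun d A) 1.
Proof.
  split. lra. intros x y. rewrite Rmult_1_l. apply Rabs_le. pose proof (gfun_lip1 d hm A x y).
  pose proof (gfun_lip1 d hm A y x). rewrite (met_sym d hm y x) in H0. lra.
Qed.

Lemma lip_open {T} (d : T -> T -> R) (hm : is_metric d) f h Lf Lh :
  lip d f Lf -> lip d h Lh -> m_open d (fun x => f x < h x).
Proof.
  intros [Hf0 Hf] [Hh0 Hh] x Hx. exists ((h x - f x) / (Lf + Lh + 1)). split.
  apply Rdiv_lt_0_compat; lra.
  intros y Hy. pose proof (met_pos d hm x y).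
  assert (Hy' : d x y * (Lf + Lh + 1) < h x - f x).
  { apply (Rmult_lt_compat_r (Lf + Lh + 1)) in Hy; [|lra]. unfold Rdiv in Hy.
    rewrite Rmult_assoc, Rinv_l in Hy; lra. }
  pose proof (Hf x y). pose proof (Hh x y).
  apply Rabs_le_between' in H0. apply Rabs_le_between' in H1.
  assert (Lf * d x y + Lh * d x y <= d x y * (Lf + Lh + 1)) by nra.
  lra.
Qed.

Fixpoint Cs {T} (d : T -> T -> R) (P : list (T -> Prop)) (i : nat) (x : T) : R :=
  match i with O => 0 | S i' => Cs d P i' x + gfun d (nth i' P (fun _ => False)) x end.

Lemma Cs_lip {T} (d : T -> T -> R) (hm : is_metric d) P i : lip d (Cs d P i) (INR i).
Proof.
  induction i; simpl Cs.
  - split. simpl; lra. intros x y. rewrite Rminus_0_r, Rabs_R0. simpl. rewrite Rmult_0_l. lra.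
  - destruct IHi as [H0 H]. split. apply pos_INR. intros x y.
    destruct (gfun_lip d hm (nth i P (fun _ => False))) as [_ Hg].
    specialize (H x y). specialize (Hg x y). rewrite S_INR.
    replace (Cs d P i x + gfun d (nth i P (fun _ => False)) x - (Cs d P i y + gfun d (nth i P (fun _ => False)) y))
      with ((Cs d P i x - Cs d P i y) + (gfun d (nth i P (fun _ => False)) x - gfun d (nth i P (fun _ => False)) y)) by ring.
    eapply Rle_trans. apply Rabs_triang. lra.
Qed.

Lemma Cs_mono {T} (d : T -> T -> R) (hm : is_metric d) P x i i' : (i <= i')%nat -> Cs d P i x <= Cs d P i' x.
Proof.
  induction 1. lra. simpl. destruct (gfun_prop d hm (nth m P (fun _ => False)) x) as ((H0&_)&_). lra.
Qed.

Lemma Cs_zero {T} (d : T -> T -> R) (hm : is_metric d) P x i :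
  (forall k, (k < i)%nat -> ~ 0 < gfun d (nth k P (fun _ => False)) x) -> Cs d P i x = 0.
Proof.
  induction i; intros H. reflexivity. simpl. rewrite IHi by (intros k Hk; apply H; lia).
  destruct (gfun_prop d hm (nth i P (fun _ => False)) x) as ((H0&_)&_).
  assert (~ 0 < gfun d (nth i P (fun _ => False)) x) by (apply H; lia). lra.
Qed.

Lemma NoDup_prod {A B} (l : list A) (l' : list B) : NoDup l -> NoDup l' -> NoDup (list_prod l l').
Proof.
  induction l; intros H H'; simpl. constructor. inversion H; subst.
  apply NoDup_app; auto.
  - apply NoDup_map_NoDup_ForallPairs; auto. intros u v _ _ E. inversion E; auto.
  - intros [u v] Hm Hp. apply in_map_iff in Hm. destruct Hm as (w&E&_). inversion E; subst.
    apply in_prod_iff in Hp. tauto.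
Qed.

Lemma D_le_join {T} (d : T -> T -> R) (hm : is_metric d) P Q a b :
  D_le d P a -> D_le d Q b -> D_le d (join P Q) (a + b + 1).
Proof.
  intros (P'&HP'&HPr&HPo) (Q'&HQ'&HQr&HQo).
  set (p := length P'). set (q := length Q').
  set (bot := fun _ : T => False).
  set (W := fun (ij : nat * nat) (x : T) =>
    Cs d P' (fst ij) x < Cs d Q' (S (snd ij)) x /\ Cs d Q' (snd ij) x < Cs d P' (S (fst ij)) x /\
    Cs d P' (fst ij) x < Cs d P' (S (fst ij)) x /\ Cs d Q' (snd ij) x < Cs d Q' (S (snd ij)) x).
  set (pairs := list_prod (seq 0 p) (seq 0 q)).
  assert (HopP : forall i, (i < p)%nat -> m_open d (nth i P' bot)).
  { intros i Hi. apply (proj1 HP'). apply nth_In. auto. }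
  assert (HopQ : forall i, (i < q)%nat -> m_open d (nth i Q' bot)).
  { intros i Hi. apply (proj1 HQ'). apply nth_In. auto. }
  assert (HgP : forall i x, 0 < gfun d (nth i P' bot) x -> nth i P' bot x).
  { intros i x. apply gfun_pos_inv; auto. }
  assert (HgQ : forall i x, 0 < gfun d (nth i Q' bot) x -> nth i Q' bot x).
  { intros i x. apply gfun_pos_inv; auto. }
  assert (Hpair : forall ij, In ij pairs -> (fst ij < p)%nat /\ (snd ij < q)%nat).
  { intros [i j] H. apply in_prod_iff in H. destruct H as [H1 H2]. apply in_seq in H1, H2. simpl. lia. }
  exists (map W pairs). split; [split|split].
  - intros E HE. apply in_map_iff in HE. destruct HE as (ij&<-&_).
    unfold W. repeat apply open_and; eapply lip_open; try apply Cs_lip; auto.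
  - intros x.
    assert (Hex : forall (P' : list (T -> Prop)), open_cover d P' -> exists i, ((i < length P')%nat /\ 0 < gfun d (nth i P' bot) x) /\
        forall k, ((k < length P')%nat /\ 0 < gfun d (nth k P' bot) x) -> (i <= k)%nat).
    { intros R HR. apply least_nat. destruct (proj2 HR x) as (A&HA&Ax).
      destruct (In_nth R A bot HA) as (n&Hn&En). exists n. split; auto.
      apply gfun_pos; auto. apply (proj1 HR). rewrite En; auto. rewrite En. auto. }
    destruct (Hex P' HP') as (i&[Hi Hgi]&Hmi). destruct (Hex Q' HQ') as (j&[Hj Hgj]&Hmj).
    assert (C1 : Cs d P' i x = 0).
    { apply Cs_zero; auto. intros k Hk Hg. assert (Hk' : (k < length P')%nat) by lia. specialize (Hmi k (conj Hk' Hg)). lia. }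
    assert (C2 : Cs d Q' j x = 0).
    { apply Cs_zero; auto. intros k Hk Hg. assert (Hk' : (k < length Q')%nat) by lia. specialize (Hmj k (conj Hk' Hg)). lia. }
    exists (W (i, j)). split.
    + apply in_map. apply in_prod_iff. split; apply in_seq; lia.
    + unfold W. simpl. fold bot. rewrite C1, C2. lra.
  - intros E HE. apply in_map_iff in HE. destruct HE as ([i j]&<-&Hij).
    destruct (Hpair _ Hij) as [Hi Hj]. simpl in Hi, Hj.
    destruct (HPr (nth i P' bot) (nth_In _ _ Hi)) as (A&HA&HAi).
    destruct (HQr (nth j Q' bot) (nth_In _ _ Hj)) as (B&HB&HBj).
    exists (fun x => A x /\ B x). split. apply in_join. eauto 10.
    intros x (_&_&H3&H4). simpl in H3, H4. fold bot in H3, H4. split.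
    + apply HAi. apply HgP. lra.
    + apply HBj. apply HgQ. lra.
  - intros x. rewrite cnt_map_eq.
    set (fil := filter (fun ij => bP (W ij x)) pairs).
    set (e := fun ij : nat * nat => Rmin (Cs d P' (S (fst ij)) x) (Cs d Q' (S (snd ij)) x)).
    set (L := map (fun i => Cs d P' (S i) x) (filter (fun i => bP (0 < gfun d (nth i P' bot) x)) (seq 0 p)) ++
              map (fun j => Cs d Q' (S j) x) (filter (fun j => bP (0 < gfun d (nth j Q' bot) x)) (seq 0 q))).
    assert (Hfil : forall ij, In ij fil -> In ij pairs /\ W ij x).
    { intros ij H. apply filter_In in H. destruct H as [H1 H2]. apply bP_1 in H2. auto. }
    assert (Hnd : NoDup (map e fil)).
    { apply NoDup_map_NoDup_ForallPairs.
      - intros [i j] [i' j'] H1 H2 Ee. apply Hfil in H1, H2. destruct H1 as [_ (W1&W2&W3&W4)].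
        destruct H2 as [_ (W1'&W2'&W3'&W4')]. unfold e in Ee. cbn [fst snd] in *.
        set (lo := Rmax (Rmax (Cs d P' i x) (Cs d Q' j x)) (Rmax (Cs d P' i' x) (Cs d Q' j' x))).
        assert (Hlo : lo < Rmin (Cs d P' (S i) x) (Cs d Q' (S j) x)).
        { unfold lo. apply Rmax_lub_lt.
          - apply Rmax_lub_lt; apply Rmin_glb_lt; lra.
          - rewrite Ee. apply Rmax_lub_lt; apply Rmin_glb_lt; lra. }
        set (t := (lo + Rmin (Cs d P' (S i) x) (Cs d Q' (S j) x)) / 2).
        pose proof (Rmin_l (Cs d P' (S i) x) (Cs d Q' (S j) x)).
        pose proof (Rmin_r (Cs d P' (S i) x) (Cs d Q' (S j) x)).
        pose proof (Rmin_l (Cs d P' (S i') x) (Cs d Q' (S j') x)).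
        pose proof (Rmin_r (Cs d P' (S i') x) (Cs d Q' (S j') x)).
        assert (Hl1 : Cs d P' i x <= lo) by (unfold lo; eapply Rle_trans; [apply Rmax_l|apply Rmax_l]).
        assert (Hl2 : Cs d Q' j x <= lo) by (unfold lo; eapply Rle_trans; [apply Rmax_r|apply Rmax_l]).
        assert (Hl3 : Cs d P' i' x <= lo) by (unfold lo; eapply Rle_trans; [apply Rmax_l|apply Rmax_r]).
        assert (Hl4 : Cs d Q' j' x <= lo) by (unfold lo; eapply Rle_trans; [apply Rmax_r|apply Rmax_r]).
        assert (i = i').
        { destruct (Nat.lt_trichotomy i i') as [Hl|[Hl|Hl]]; auto; exfalso.
          - pose proof (Cs_mono d hm P' x (S i) i' Hl). unfold t in *. lra.
          - pose proof (Cs_mono d hm P' x (S i') i Hl). unfold t in *. lra. }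
        assert (j = j').
        { destruct (Nat.lt_trichotomy j j') as [Hl|[Hl|Hl]]; auto; exfalso.
          - pose proof (Cs_mono d hm Q' x (S j) j' Hl). unfold t in *. lra.
          - pose proof (Cs_mono d hm Q' x (S j') j Hl). unfold t in *. lra. }
        subst. reflexivity.
      - apply NoDup_filter. apply NoDup_prod; apply seq_NoDup. }
    assert (Hincl : incl (map e fil) L).
    { intros r Hr. apply in_map_iff in Hr. destruct Hr as ([i j]&<-&Hij).
      destruct (Hfil _ Hij) as [Hp (W1&W2&W3&W4)]. destruct (Hpair _ Hp) as [Hi Hj]. cbn [fst snd] in *.
      unfold e. cbn [fst snd]. apply in_or_app. unfold Rmin. destruct (Rle_dec _ _).
      - left. apply (in_map (fun i => Cs d P' (S i) x)). apply filter_In. split. apply in_seq; lia.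
        apply bP_2. simpl in W3. fold bot in W3. lra.
      - right. apply (in_map (fun j => Cs d Q' (S j) x)). apply filter_In. split. apply in_seq; lia.
        apply bP_2. simpl in W4. fold bot in W4. lra. }
    pose proof (NoDup_incl_length Hnd Hincl). rewrite length_map in H.
    assert (HLl : length L = (cnt x P' + cnt x Q')%nat).
    { unfold L. rewrite length_app, !length_map, (cnt_nth x P'), (cnt_nth x Q'). fold p q. f_equal.
      - f_equal. apply filter_ext_in. intros i Hi. apply in_seq in Hi. apply bP_ext. split.
        + intros. apply HgP; auto.
        + intros. apply gfun_pos; auto. apply HopP. lia.
      - f_equal. apply filter_ext_in. intros i Hi. apply in_seq in Hi. apply bP_ext. split.
        + intros. apply HgQ; auto.
        + intros. apply gfun_pos; auto. apply HopQ. lia. }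
    specialize (HPo x). specialize (HQo x). fold fil. lia.
Qed.


Lemma Dn_subadd {T} (d : T -> T -> R) (hm : is_metric d) (b : homeo d) U : open_cover d U ->
  forall m n, (Dn d U b (m + n) <= Dn d U b m + Dn d U b n + 1)%nat.
Proof.
  intros HU m n. unfold Dn.
  assert (Hc := hf_cont d b).
  destruct (Dcov_oc d (joinN U (hf b) m) (oc_joinN d U (hf b) Hc HU m)) as [Hm _].
  destruct (Dcov_oc d (joinN U (hf b) n) (oc_joinN d U (hf b) Hc HU n)) as [Hn _].
  destruct (Dcov_oc d (joinN U (hf b) (m + n)) (oc_joinN d U (hf b) Hc HU (m + n))) as [_ Hmin].
  apply Hmin. eapply D_le_refine. apply joinN_add_ref. apply D_le_join; auto.
  apply D_le_preim; auto. apply cont_iter; auto.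
Qed.

Lemma Dn_refine {T} (d : T -> T -> R) (a : homeo d) U V : open_cover d U -> open_cover d V -> refines V U ->
  forall n, (Dn d U a n <= Dn d V a n)%nat.
Proof.
  intros HU HV HVU n. unfold Dn.
  assert (Hc := hf_cont d a).
  destruct (Dcov_oc d (joinN V (hf a) n) (oc_joinN d V (hf a) Hc HV n)) as [HD _].
  destruct (Dcov_oc d (joinN U (hf a) n) (oc_joinN d U (hf a) Hc HU n)) as [_ Hmin].
  apply Hmin. eapply D_le_refine; [|exact HD].
  intros E HE. apply joinN_bwd. intros j Hj. destruct (joinN_fwd V (hf a) n E HE j Hj) as (A&HA&HH).
  destruct (HVU A HA) as (A'&HA'&HAA'). exists A'. split; auto.
Qed.

Lemma Lim_ge0 (u : nat -> R) : (forall n, 0 <= u n) -> Rbar_le 0 (Lim_seq u).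
Proof.
  intros H. rewrite <- (Lim_seq_const 0). apply Lim_seq_le_loc. exists 0%nat. auto.
Qed.

Lemma Lim_le_eps (u : nat -> R) (c : R) :
  (forall eps, 0 < eps -> exists N, forall n, (N <= n)%nat -> u n <= c + eps) -> Rbar_le (Lim_seq u) c.
Proof.
  intros H. assert (Hl : forall eps, 0 < eps -> Rbar_le (Lim_seq u) (c + eps)).
  { intros eps He. rewrite <- (Lim_seq_const (c + eps)). apply Lim_seq_le_loc.
    destruct (H eps He) as (N&HN). exists N. auto. }
  destruct (Lim_seq u) as [r| |] eqn:E; simpl.
  - destruct (Rle_dec r c); auto. specialize (Hl ((r - c) / 2) ltac:(lra)). simpl in Hl. lra.
  - specialize (Hl 1 ltac:(lra)). simpl in Hl. auto.
  - auto.
Qed.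

Lemma Lim_lt_exists (u : nat -> R) (c : R) : (forall n, 0 <= u n) -> Rbar_lt (Lim_seq u) c ->
  exists c', c' < c /\ forall N, exists n, (N <= n)%nat /\ u n < c'.
Proof.
  intros H0 Hlt. pose proof (Lim_ge0 u H0) as Hge.
  destruct (Lim_seq u) as [L| |] eqn:E; simpl in Hlt, Hge; try contradiction.
  exists ((L + c) / 2). split. lra. intros N. apply NNPP. intros Hn.
  assert (Rbar_le (Lim_seq (fun _ => (L + c) / 2)) (Lim_seq u)).
  { apply Lim_seq_le_loc. exists N. intros n Hn'. apply Rnot_lt_le. intros Hc. apply Hn. eauto. }
  rewrite Lim_seq_const, E in H. simpl in H. lra.
Qed.

Lemma bound_below (f : nat -> nat) N : exists C, forall r, (r < N)%nat -> (f r <= C)%nat.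
Proof.
  induction N. exists 0%nat. intros; lia. destruct IHN as (C&HC). exists (Nat.max C (f N)).
  intros r Hr. destruct (Nat.eq_dec r N). subst; lia. specialize (HC r ltac:(lia)). lia.
Qed.

Lemma fekete_bound (s : nat -> nat) (Hs : forall m n, (s (m + n) <= s m + s n + 1)%nat) n0 : (0 < n0)%nat ->
  Rbar_le (Lim_seq (fun n => INR (s n) / INR n)) ((INR (s n0) + 1) / INR n0).
Proof.
  intros Hn0. set (t := fun n => (s n + 1)%nat).
  assert (Ht : forall q r, (t (q * n0 + r) <= q * t n0 + t r)%nat).
  { induction q; intros r. simpl. lia. replace (S q * n0 + r)%nat with (n0 + (q * n0 + r))%nat by lia.
    specialize (IHq r). specialize (Hs n0 (q * n0 + r)%nat). unfold t in *. nia. }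
  destruct (bound_below t n0) as (C&HC).
  set (c := (INR (s n0) + 1) / INR n0).
  assert (Hn0R : 0 < INR n0) by (apply lt_0_INR; lia).
  assert (HcN : c * INR n0 = INR (s n0) + 1) by (unfold c; field; lra).
  assert (Hc0 : 0 <= c) by (unfold c; apply Rdiv_le_0_compat; [pose proof (pos_INR (s n0)); lra | lra]).
  apply Lim_le_eps. intros eps He.
  assert (HC1 : 0 < INR C + 1) by (pose proof (pos_INR C); lra).
  destruct (archimed_cor1 (eps / (INR C + 1))) as (N&HN&HN0). { apply Rdiv_lt_0_compat; lra. }
  exists N. intros n Hn.
  assert (Hnpos : 0 < INR n) by (apply lt_0_INR; lia).
  set (q := (n / n0)%nat). set (r := (n mod n0)%nat).
  assert (Hdm : n = (q * n0 + r)%nat) by (unfold q, r; rewrite (Nat.div_mod_eq n n0) at 1; lia).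
  assert (Hr : (r < n0)%nat) by (unfold r; apply Nat.mod_upper_bound; lia).
  assert (Hsn : (s n <= q * t n0 + C)%nat).
  { specialize (Ht q r). specialize (HC r Hr). rewrite <- Hdm in Ht. unfold t in Ht at 1. lia. }
  apply le_INR in Hsn. rewrite plus_INR, mult_INR in Hsn. unfold t in Hsn. rewrite plus_INR in Hsn. simpl (INR 1) in Hsn.
  assert (Hq : INR q * INR n0 <= INR n) by (rewrite <- mult_INR; apply le_INR; lia).
  assert (HCn : INR C <= eps * INR n).
  { assert (HNp : 0 < INR N) by (apply lt_0_INR; lia).
    assert (HNn : INR N <= INR n) by (apply le_INR; lia).
    set (v := eps / (INR C + 1)) in HN.
    assert (Hv : v * (INR C + 1) = eps) by (unfold v; field; lra).
    assert (Hu : / INR N * INR N = 1) by (field; lra).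
    set (u := / INR N) in HN, Hu.
    assert (H1 : 1 < v * INR N) by nra.
    assert (H2 : INR C + 1 < eps * INR N) by nra.
    nra. }
  assert (Hcq : c * (INR q * INR n0) <= c * INR n) by (apply Rmult_le_compat_l; auto).
  replace (c * (INR q * INR n0)) with (INR q * (c * INR n0)) in Hcq by ring. rewrite HcN in Hcq.
  unfold Rdiv. apply (Rmult_le_reg_r (INR n)); auto. rewrite Rmult_assoc, Rinv_l, Rmult_1_r by lra.
  lra.
Qed.

Lemma Dn_usc {T} (d : T -> T -> R) (hm : is_metric d) (hc : m_compact d) (a : homeo d) U n :
  open_cover d U ->
  exists eps, 0 < eps /\ forall b : homeo d, (forall x, d (hf a x) (hf b x) < eps) -> (Dn d U b n <= Dn d U a n)%nat.
Proof.
  intros HU.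
  destruct (Dcov_oc d (joinN U (hf a) n) (oc_joinN d U (hf a) (hf_cont d a) HU n)) as [(V&HV&HVr&HVo) _].
  destruct (lebesgue d hm hc V HV) as (lam&Hlam&HL).
  assert (Hua := cont_unif d hm hc (hf a) (hf_cont d a)).
  assert (Hug := cont_unif d hm hc (hg a) (hg_cont d a)).
  assert (Hclose : forall k, exists del, 0 < del /\ forall g : T -> T, (forall x, d (hf a x) (g x) < del) ->
     forall j, (j < k)%nat -> forall x, d x (Nat.iter j (hg a) (Nat.iter j g x)) < lam / 2).
  { induction k.
    - exists 1. split. lra. intros; lia.
    - destruct IHk as (d1&Hd1&H1).
      destruct (unif_iter d (hg a) Hug k (lam / 2) ltac:(lra)) as (eta&Heta&He).
      destruct (iter_close d hm (hf a) Hua k eta Heta) as (d2&Hd2&H2).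
      exists (Rmin d1 d2). split. apply Rmin_glb_lt; auto.
      intros g Hg j Hj x. destruct (Nat.eq_dec j k) as [->|Hne].
      + rewrite <- (iter_hg_hf d a k x) at 1. apply He. apply H2.
        intros y. eapply Rlt_le_trans. apply Hg. apply Rmin_r.
      + apply H1. intros y. eapply Rlt_le_trans. apply Hg. apply Rmin_l. lia. }
  destruct (Hclose n) as (del&Hdel&Hcl).
  exists del. split; auto. intros b Hb.
  set (V2 := map (fun A z => exists y, (forall w, d y w < lam -> A w) /\ d y z < lam / 2) V).
  assert (HD : D_le d (joinN U (hf b) n) (Dn d U a n)).
  { exists V2. split; [split|split].
    - intros E HE. apply in_map_iff in HE. destruct HE as (A&<-&HA).
      intros z (y&Hy&Hyz). exists (lam / 2 - d y z). split. lra. intros w Hw. exists y. split; auto.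
      pose proof (met_tri d hm y z w). lra.
    - intros z. destruct (HL z) as (A&HA&HAz).
      exists (fun z0 => exists y, (forall w, d y w < lam -> A w) /\ d y z0 < lam / 2). split.
      apply (in_map (fun A z => exists y, (forall w, d y w < lam -> A w) /\ d y z < lam / 2)); auto.
      exists z. split; auto. rewrite met_refl; auto. lra.
    - intros E HE. apply in_map_iff in HE. destruct HE as (A&<-&HA).
      destruct (HVr A HA) as (E'&HE'&HAE').
      apply joinN_bwd. intros j Hj. destruct (joinN_fwd U (hf a) n E' HE' j Hj) as (A0&HA0&HH).
      exists A0. split; auto. intros z (y&Hy&Hyz).
      specialize (Hcl (hf b) Hb j Hj z).
      rewrite <- (iter_hf_hg d a j (Nat.iter j (hf b) z)). apply HH. apply HAE'. apply Hy.
      pose proof (met_tri d hm y z (Nat.iter j (hg a) (Nat.iter j (hf b) z))). lra.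
    - intros z. unfold V2. eapply Nat.le_trans. 2: apply (HVo z).
      replace (cnt z V) with (cnt z (map (fun A => A) V)) by (rewrite map_id; reflexivity).
      apply cnt_map_le. intros A _ (y&Hy&Hyz). apply Hy. lra. }
  unfold Dn at 1. apply (proj2 (Dcov_oc d _ (oc_joinN d U (hf b) (hf_cont d b) HU n))). exact HD.
Qed.


Lemma open_fst {A B} (dA : A -> A -> R) (dB : B -> B -> R) (O : A -> Prop) :
  m_open dA O -> m_open (dprod dA dB) (fun q => O (fst q)).
Proof.
  intros H q Hq. destruct (H _ Hq) as (e&He&HH). exists e. split; auto.
  intros q' Hq'. apply HH. apply (dprod_lt_inv dA dB) in Hq'. tauto.
Qed.

Lemma open_snd {A B} (dA : A -> A -> R) (dB : B -> B -> R) (O : B -> Prop) :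
  m_open dB O -> m_open (dprod dA dB) (fun q => O (snd q)).
Proof.
  intros H q Hq. destruct (H _ Hq) as (e&He&HH). exists e. split; auto.
  intros q' Hq'. apply HH. apply (dprod_lt_inv dA dB) in Hq'. tauto.
Qed.

Lemma cnt_zero {T} (x : T) U : (forall A, In A U -> ~ A x) -> cnt x U = 0%nat.
Proof.
  induction U; intros H. reflexivity. rewrite cnt_cons, IHU by (intros; apply H; simpl; auto).
  destruct (bP (a x)) eqn:E. apply bP_1 in E. exfalso. apply (H a); simpl; auto. reflexivity.
Qed.

Lemma cnt_flat_map_bound {T I} (x : T) (F : I -> list (T -> Prop)) (l : list I) (P : I -> Prop) K :
  (forall i, In i l -> ~ P i -> cnt x (F i) = 0%nat) -> (forall i, In i l -> (cnt x (F i) <= K)%nat) ->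
  (cnt x (flat_map F l) <= length (filter (fun i => bP (P i)) l) * K)%nat.
Proof.
  induction l; intros H1 H2; simpl. rewrite cnt_def; simpl; lia. rewrite cnt_app.
  assert (IH := IHl (fun i Hi => H1 i (or_intror Hi)) (fun i Hi => H2 i (or_intror Hi))).
  destruct (bP (P a)) eqn:E; simpl.
  - specialize (H2 a (or_introl eq_refl)). lia.
  - rewrite H1; simpl; auto. intros Hp. apply bP_2 in Hp. congruence.
Qed.

Lemma iter_zid {Z Y} (f : Z -> Z) j (q : Z * Y) :
  Nat.iter j (fun q : Z * Y => (f (fst q), snd q)) q = (Nat.iter j f (fst q), snd q).
Proof. induction j; simpl. destruct q; reflexivity. rewrite IHj. reflexivity. Qed.

Lemma iter_conj {X} (d : X -> X -> R) (b G : homeo d) (k : X -> X) :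
  (forall p, hf b p = hg G (k (hf G p))) -> forall j p, Nat.iter j (hf b) p = hg G (Nat.iter j k (hf G p)).
Proof.
  intros H j. induction j; intros p; simpl. rewrite hgf. reflexivity.
  rewrite H, IHj, hfg. reflexivity.
Qed.

Lemma ball_cover {T} (d : T -> T -> R) (hm : is_metric d) (hc : m_compact d) r : 0 < r ->
  exists l : list T, forall x, exists c, In c l /\ d c x < r.
Proof.
  intros Hr. destruct (hc T (fun c x => d c x < r)) as (l&Hl).
  - intros c. apply ball_open; auto.
  - intros x. exists x. rewrite met_refl; auto.
  - exists l. auto.
Qed.

Lemma S_bounded (Z Y : Type) (dZ : Z -> Z -> R) (dY : Y -> Y -> R) (zeta : homeo dZ)
  (hZmet : is_metric dZ) (hZcpt : m_compact dZ) (hZdim : exists m, covdim_le dZ m)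
  (hYmet : is_metric dY) (hYcpt : m_compact dY) (b : homeo (dprod dZ dY)) U :
  in_S dZ dY zeta b -> open_cover (dprod dZ dY) U -> exists M, forall n, (Dn (dprod dZ dY) U b n <= M)%nat.
Proof.
  intros (G&g&_&_&Hb) HU.
  assert (hX := dprod_metric dZ dY hZmet hYmet).
  assert (cX := prod_compact dZ dY hZmet hYmet hZcpt hYcpt).
  destruct hZdim as (m&Hm).
  assert (HW : open_cover (dprod dZ dY) (preim (hg G) U)) by (apply oc_preim; auto; apply hg_cont).
  destruct (lebesgue _ hX cX _ HW) as (lam&Hlam&HL).
  destruct (ball_cover dZ hZmet hZcpt (lam / 2) ltac:(lra)) as (cz&Hcz).
  destruct (ball_cover dY hYmet hYcpt (lam / 2) ltac:(lra)) as (cy&Hcy).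
  set (CZ := map (fun c z => dZ c z < lam / 2) cz).
  set (CY := map (fun c y => dY c y < lam / 2) cy).
  assert (HCZ : open_cover dZ CZ).
  { split. intros A HA. apply in_map_iff in HA. destruct HA as (c&<-&_). apply ball_open; auto.
    intros z. destruct (Hcz z) as (c&Hc&Hcz'). exists (fun z => dZ c z < lam / 2). split; auto.
    apply (in_map (fun c z => dZ c z < lam / 2)); auto. }
  exists ((m + 1) * length cy)%nat. intros n.
  set (JZ := joinN CZ (hf zeta) n).
  assert (HJ : open_cover dZ JZ) by (apply oc_joinN; auto; apply hf_cont).
  destruct (Hm JZ HJ) as (RZ&HRZ&HRr&HRo).
  set (Q := flat_map (fun R => map (fun C => fun p => R (fst (hf G p)) /\ C (snd (hf G p))) CY) RZ).
  assert (HD : D_le (dprod dZ dY) (joinN U (hf b) n) ((m + 1) * length cy)).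
  { exists Q. split; [split|split].
    - intros E HE. apply in_flat_map in HE. destruct HE as (R&HR&HE). apply in_map_iff in HE.
      destruct HE as (C&<-&HC). apply in_map_iff in HC. destruct HC as (c&<-&_).
      apply (open_preim (dprod dZ dY) (dprod dZ dY) (hf G) (fun q => R (fst q) /\ dY c (snd q) < lam / 2)). apply hf_cont.
      apply open_and. apply (open_fst dZ dY R). apply (proj1 HRZ); auto. apply (open_snd dZ dY (fun y => dY c y < lam / 2)). apply ball_open; auto.
    - intros p. destruct (proj2 HRZ (fst (hf G p))) as (R&HR&HRp).
      destruct (Hcy (snd (hf G p))) as (c&Hc&Hcp).
      exists (fun p => R (fst (hf G p)) /\ dY c (snd (hf G p)) < lam / 2). split; auto.
      apply in_flat_map. exists R. split; auto.
      apply in_map_iff. exists (fun y => dY c y < lam / 2). split. reflexivity.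
      apply (in_map (fun c y => dY c y < lam / 2)); auto.
    - intros E HE. apply in_flat_map in HE. destruct HE as (R&HR&HE). apply in_map_iff in HE.
      destruct HE as (C&<-&HC). apply in_map_iff in HC. destruct HC as (c'&<-&_).
      destruct (HRr R HR) as (E'&HE'&HRE').
      apply joinN_bwd. intros j Hj.
      destruct (joinN_fwd CZ (hf zeta) n E' HE' j Hj) as (A&HA&HAE).
      apply in_map_iff in HA. destruct HA as (c&<-&_).
      destruct (HL (c, c')) as (A'&HA'&HA'b). apply in_preim in HA'. destruct HA' as (A0&HA0&->).
      exists A0. split; auto. intros p [Hp1 Hp2].
      rewrite (iter_conj _ b G (fun q : Z * Y => (hf zeta (fst q), snd q)) Hb j p).
      apply HA'b. rewrite iter_zid. apply dprod_lt; simpl.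
      + specialize (HAE _ (HRE' _ Hp1)). lra.
      + lra.
    - intros p. eapply Nat.le_trans.
      apply (cnt_flat_map_bound p _ RZ (fun R => R (fst (hf G p))) (length cy)).
      + intros R _ HnR. apply cnt_zero. intros A HA. apply in_map_iff in HA. destruct HA as (C&<-&_).
        tauto.
      + intros R _. eapply Nat.le_trans. apply cnt_le_length. unfold CY. rewrite !length_map. lia.
      + specialize (HRo (fst (hf G p))). rewrite cnt_def in HRo. nia. }
  unfold Dn. apply (proj2 (Dcov_oc _ _ (oc_joinN _ U (hf b) (hf_cont _ b) HU n))). exact HD.
Qed.


Lemma basic_oc {T} (d : T -> T -> R) (B : nat -> T -> Prop) l :
  is_base d B -> basic_cover B l -> open_cover d (map B l).
Proof.
  intros [Ho _] Hl. split.
  - intros A HA. apply in_map_iff in HA. destruct HA as (n&<-&_). auto.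
  - intros x. destruct (Hl x) as (n&Hn&Hx). exists (B n). split; auto. apply in_map; auto.
Qed.

Lemma ratio_nonneg (s : nat -> nat) n : 0 <= INR (s n) / INR n.
Proof.
  destruct n. simpl. unfold Rdiv. rewrite Rinv_0, Rmult_0_r. lra.
  apply Rdiv_le_0_compat. apply pos_INR. apply lt_0_INR. lia.
Qed.

Lemma bounded_Lim (s : nat -> nat) M : (forall n, (s n <= M)%nat) ->
  Rbar_le (Lim_seq (fun n => INR (s n) / INR n)) 0.
Proof.
  intros H. apply Lim_le_eps. intros eps He.
  assert (HM : 0 < INR M + 1) by (pose proof (pos_INR M); lra).
  destruct (archimed_cor1 (eps / (INR M + 1))) as (N&HN&HN0). { apply Rdiv_lt_0_compat; lra. }
  exists N. intros n Hn.
  assert (HNp : 0 < INR N) by (apply lt_0_INR; lia).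
  assert (Hnp : 0 < INR n) by (apply lt_0_INR; lia).
  assert (HNn : INR N <= INR n) by (apply le_INR; lia).
  assert (Hs : INR (s n) <= INR M) by (apply le_INR; auto).
  set (v := eps / (INR M + 1)) in HN.
  assert (Hv : v * (INR M + 1) = eps) by (unfold v; field; lra).
  assert (Hu : / INR N * INR N = 1) by (field; lra).
  set (u := / INR N) in HN, Hu.
  assert (H1 : 1 < v * INR N) by nra.
  assert (H2 : INR M + 1 < eps * INR N) by nra.
  unfold Rdiv. apply (Rmult_le_reg_r (INR n)); auto. rewrite Rmult_assoc, Rinv_l, Rmult_1_r by lra.
  nra.
Qed.

Lemma hdist_close {T} (d : T -> T -> R) (hm : is_metric d) (a b : homeo d) eps :
  hdist_lt d a b eps -> forall x, d (hf a x) (hf b x) < eps.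
Proof.
  intros (a'&b'&Hab&Ha&Hb) x. pose proof (Ha x). pose proof (Hb x).
  pose proof (met_pos d hm (hg a x) (hg b x)). lra.
Qed.

Lemma Rbar_lt_inv_all (x : Rbar) : (forall k, (0 < k)%nat -> Rbar_lt x (Finite (1 / INR k))) -> Rbar_le x 0.
Proof.
  intros H. destruct x as [r| |]; simpl.
  - destruct (Rle_dec r 0); auto. destruct (archimed_cor1 r) as (N&HN&HN0). lra.
    specialize (H N HN0). simpl in H. unfold Rdiv in H. rewrite Rmult_1_l in H. lra.
  - specialize (H 1%nat ltac:(lia)). simpl in H. auto.
  - auto.
Qed.

Theorem lemma3p4 (Z Y : Type) (dZ : Z -> Z -> R) (dY : Y -> Y -> R)
  (zeta : homeo dZ)
  (hZmet : is_metric dZ) (hZcpt : m_compact dZ) (hZconn : m_connected dZ)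
  (hZinf : m_infinite Z) (hZdim : exists m, covdim_le dZ m)
  (hmin : minimal_homeo dZ zeta)
  (hYmet : is_metric dY) (hYcpt : m_compact dY)
  (B : nat -> Z * Y -> Prop) (hB : is_base (dprod dZ dY) B) :
  (* (1) density *)
  (forall l k, basic_cover B l -> (0 < k)%nat ->
     forall a, in_clS dZ dY zeta a -> forall eps, 0 < eps ->
       exists b, H_Uk dZ dY zeta B l k b /\ hdist_lt (dprod dZ dY) a b eps) /\
  (* (2) openness relative to the closure *)
  (forall l k, basic_cover B l -> (0 < k)%nat ->
     forall a, H_Uk dZ dY zeta B l k a -> exists eps, 0 < eps /\
       forall b, in_clS dZ dY zeta b -> hdist_lt (dprod dZ dY) a b eps ->
         H_Uk dZ dY zeta B l k b) /\
  (* (3) generic points have mean dimension zero *)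
  (forall a, in_clS dZ dY zeta a ->
     (forall l k, basic_cover B l -> (0 < k)%nat -> H_Uk dZ dY zeta B l k a) ->
     mdim (dprod dZ dY) a = Finite 0).
Proof.
  assert (hX := dprod_metric dZ dY hZmet hYmet).
  assert (cX := prod_compact dZ dY hZmet hYmet hZcpt hYcpt).
  assert (Hk : forall k, (0 < k)%nat -> 0 < 1 / INR k).
  { intros k Hk. apply Rdiv_lt_0_compat. lra. apply lt_0_INR; auto. }
  split; [|split].
  -
    intros l k Hl Hk0 a Ha eps He. destruct (Ha eps He) as (b&Hb&Hab). exists b. split; auto. split.
    + intros e He'. exists b. split; auto. exists 0, 0. split. lra.
      split; intros x; rewrite met_refl; auto; lra.
    + destruct (S_bounded Z Y dZ dY zeta hZmet hZcpt hZdim hYmet hYcpt b (map B l) Hb (basic_oc _ B l hB Hl))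
        as (M&HM).
      pose proof (bounded_Lim _ M HM) as HL. specialize (Hk k Hk0). unfold Dlim.
      destruct (Lim_seq (fun n => INR (Dn (dprod dZ dY) (map B l) b n) / INR n)) as [r| |]; simpl in *; auto. lra.
  -
    intros l k Hl Hk0 a [Ha Hlt].
    assert (HU := basic_oc _ B l hB Hl).
    destruct (Lim_lt_exists _ _ (fun n => ratio_nonneg (Dn (dprod dZ dY) (map B l) a) n) Hlt) as (c'&Hc'&Hinf).
    destruct (archimed_cor1 (1 / INR k - c')) as (N0&HN0&HN0p). lra.
    destruct (Hinf N0) as (n0&Hn0&Hun0).
    assert (Hn0p : 0 < INR n0) by (apply lt_0_INR; lia).
    assert (Hbound : (INR (Dn (dprod dZ dY) (map B l) a n0) + 1) / INR n0 < 1 / INR k).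
    { assert (/ INR n0 <= / INR N0) by (apply Rinv_le_contravar; [apply lt_0_INR; lia| apply le_INR; lia]).
      replace ((INR (Dn (dprod dZ dY) (map B l) a n0) + 1) / INR n0)
        with (INR (Dn (dprod dZ dY) (map B l) a n0) / INR n0 + / INR n0) by (field; lra).
      lra. }
    destruct (Dn_usc _ hX cX a (map B l) n0 HU) as (eps&Heps&Husc).
    exists eps. split; auto. intros b Hb Hab. split; auto.
    assert (Hle := Husc b (hdist_close _ hX a b eps Hab)).
    pose proof (fekete_bound (Dn (dprod dZ dY) (map B l) b) (Dn_subadd _ hX b _ HU) n0 ltac:(lia)) as HF.
    assert (Hle' : (INR (Dn (dprod dZ dY) (map B l) b n0) + 1) / INR n0 <=
                   (INR (Dn (dprod dZ dY) (map B l) a n0) + 1) / INR n0).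
    { unfold Rdiv. apply Rmult_le_compat_r. left. apply Rinv_0_lt_compat; auto.
      apply le_INR in Hle. lra. }
    unfold Dlim. destruct (Lim_seq (fun n => INR (Dn (dprod dZ dY) (map B l) b n) / INR n)) as [r| |];
      simpl in *; auto; lra.
  -
    intros a Ha Hall.
    assert (Hzero : forall U, open_cover (dprod dZ dY) U -> Dlim (dprod dZ dY) U a = Finite 0).
    { intros U HU.
      set (I := {n : nat | exists A, In A U /\ forall x, B n x -> A x}).
      destruct (cX I (fun i => B (proj1_sig i))) as (li&Hli).
      - intros i. apply (proj1 hB).
      - intros x. destruct (proj2 HU x) as (A&HA&Ax).
        destruct (proj2 hB A (proj1 HU A HA) x Ax) as (n&Hn&HnA).
        exists (exist _ n (ex_intro _ A (conj HA HnA))). simpl. auto.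
      - set (l := map (@proj1_sig _ _) li).
        assert (Hl : basic_cover B l).
        { intros x. destruct (Hli x) as (i&Hi&Hx). exists (proj1_sig i). split; auto.
          apply in_map; auto. }
        assert (Href : refines (map B l) U).
        { intros E HE. apply in_map_iff in HE. destruct HE as (n&<-&Hn). apply in_map_iff in Hn.
          destruct Hn as (i&<-&_). destruct (proj2_sig i) as (A&HA&HH). exists A. auto. }
        assert (HUl := basic_oc _ B l hB Hl).
        assert (Hle : Rbar_le (Dlim (dprod dZ dY) U a) (Dlim (dprod dZ dY) (map B l) a)).
        { unfold Dlim. apply Lim_seq_le_loc. exists 0%nat. intros n _.
          pose proof (Dn_refine _ a U (map B l) HU HUl Href n) as Hn. apply le_INR in Hn.
          unfold Rdiv. apply Rmult_le_compat_r; auto. destruct n. simpl. rewrite Rinv_0. lra.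
          left. apply Rinv_0_lt_compat. apply lt_0_INR; lia. }
        assert (Hup : Rbar_le (Dlim (dprod dZ dY) (map B l) a) 0).
        { apply Rbar_lt_inv_all. intros k Hk0. apply (Hall l k Hl Hk0). }
        assert (Hlo : Rbar_le 0 (Dlim (dprod dZ dY) U a)).
        { apply Lim_ge0. intros n. apply ratio_nonneg. }
        apply Rbar_le_antisym; auto. eapply Rbar_le_trans; eauto. }
    unfold mdim. apply Rbar_is_lub_unique. split.
    + intros x (U&HU&->). rewrite Hzero; auto. simpl. lra.
    + intros bnd Hub. assert (H0 : open_cover (dprod dZ dY) ((fun _ => True) :: nil)).
      { split. intros A [<-|[]]. apply open_True. intros x. exists (fun _ => True). simpl; auto. }
      specialize (Hub (Dlim (dprod dZ dY) ((fun _ => True) :: nil) a)).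
      rewrite Hzero in Hub; auto. apply Hub. exists ((fun _ => True) :: nil). split; auto. rewrite Hzero; auto.
Qed.
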